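(* Let $n\ge2$ and $A\in s(n)$. If there exists $i\in\{1,\dots,n\}$ such that all entries of the $i$-th column $Ae_i$ are strictly positive, then $A$ is divisible in $s(n)$.
   Context: $s(n)$ denotes the set of $n\times n$ column-stochastic matrices (non-negative real entries, each column summing to $1$), a monoid under matrix multiplication whose group of units is the set of permutation matrices. $A\in s(n)$ is indivisible if for every decomposition $A=BC$ with $B,C\in s(n)$ exactly one of $B,C$ is a permutation matrix, and divisible otherwise. $e_i$ is the $i$-th standard basis vector. *)

(* Defs.v *)
From mathcomp Require Import all_boot all_order all_algebra.
From mathcomp Require Import reals.
Set Implicit Arguments. Unset Strict Implicit. Unset Printing Implicit Defensive.
Import Order.TTheory GRing.Theory Num.Theory.
Local Open Scope ring_scope.

(* Column-stochastic n x n real matrices: the monoid s(n). *)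
Definition col_stochastic (R : realType) (n : nat) (A : 'M[R]_n) : Prop :=
  (forall i j, 0 <= A i j) /\ (forall j, \sum_(i < n) A i j = 1).

Definition indivisible (R : realType) (n : nat) (A : 'M[R]_n) : Prop :=
  forall B C : 'M[R]_n, col_stochastic B -> col_stochastic C ->
    A = B *m C -> (is_perm_mx B (+) is_perm_mx C)%B.

Definition divisible (R : realType) (n : nat) (A : 'M[R]_n) : Prop :=
  ~ indivisible A.

(* Main.v *)
Require Import Defs.
From mathcomp Require Import all_boot all_order all_algebra.
From mathcomp Require Import reals.
From mathcomp Require Import perm.
Import Order.TTheory GRing.Theory Num.Theory.
Local Open Scope ring_scope.

Lemma perm_entry (R : realType) n (s : perm.perm_of 'I_n) k l :
  (perm_mx s : 'M[R]_n) k l = ((s k == l)%:R).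
Proof. by rewrite /perm_mx /row_perm !mxE. Qed.

Theorem corollary1 (R : realType) (n : nat) (A : 'M[R]_n) :
  (2 <= n)%N -> col_stochastic A ->
  (exists i : 'I_n, forall k : 'I_n, 0 < A k i) ->
  divisible A.
Proof.
move=> n2 [A0 A1] [i Ai].
have n0 : (0 < n)%N by apply: leq_trans n2.
have n1 : (1 < n)%N by [].
pose o0 := Ordinal n0. pose o1 := Ordinal n1.
have [j ji] : exists j : 'I_n, j != i.
  case: (eqVneq o0 i) => [e|h]; last by exists o0.
  by exists o1; rewrite -e.
case: (arg_minP (fun k => A k i) (isT : predT i)) => k0 _ kmin.
pose m := A k0 i.
have m0 : 0 < m by apply: Ai.
have mle : forall k, m <= A k i by move=> k; apply: kmin.
have m1 : m <= 1.
  rewrite -(A1 i) (bigD1 k0) //= lerDl; apply: sumr_ge0 => k _; apply: A0.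
pose t := m / 2.
have t0 : 0 < t by rewrite divr_gt0.
have tm : t < m by rewrite /t ltr_pdivrMr // ltr_pMr // ltr1n.
have t1 : t < 1 by apply: lt_le_trans m1.
have Ajle : forall k l, A k l <= 1.
  move=> k l; rewrite -(A1 l) (bigD1 k) //= lerDl; apply: sumr_ge0 => ? _; apply: A0.
have pos : forall k, 0 < A k i - t * A k j.
  move=> k; rewrite subr_gt0; apply: (le_lt_trans _ (lt_le_trans tm (mle k))).
  by rewrite ler_piMr // ltW.
have t1' : 0 < 1 - t by rewrite subr_gt0.
pose B := \matrix_(k, l) if l == i then (A k i - t * A k j) / (1 - t) else A k l.
pose C := \matrix_(k, l) if l == i then ((k == i)%:R * (1 - t) + (k == j)%:R * t)
                         else (k == l)%:R : R.
move=> ind.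
have BS : col_stochastic B.
  split=> [k l|l]; rewrite ?mxE.
    by case: ifP => _ //; apply/ltW/divr_gt0.
  under eq_bigr do rewrite mxE.
  case: (l == i); last by [].
  rewrite -mulr_suml sumrB -mulr_sumr !A1 mulr1.
  by rewrite divff // gt_eqF.
have CS : col_stochastic C.
  split=> [k l|l]; rewrite ?mxE.
    case: ifP => _; last by case: (k == l).
    apply: addr_ge0; apply: mulr_ge0; rewrite ?ler0n ?ltW //.
  under eq_bigr do rewrite mxE.
  case: (l == i).
    rewrite big_split /= -!mulr_suml.
    rewrite (bigD1 i) //= big1 => [|k /negbTE ->] //.
    rewrite (bigD1 j) //= big1 => [|k /negbTE ->] //.
    rewrite !eqxx !addr0 !mul1r; by rewrite subrK.
  rewrite (bigD1 l) //= big1 => [|k /negbTE ->] //.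
  by rewrite eqxx addr0.
have AE : A = B *m C.
  apply/matrixP => k l; rewrite !mxE.
  under eq_bigr do rewrite !mxE.
  case: (eqVneq l i) => [-> | li]; rewrite ?eqxx ?(negbTE li).
    rewrite (bigD1 i) //= (bigD1 j) //= big1; last first.
      move=> q /andP [qi qj]; rewrite (negbTE qi) (negbTE qj).
      by rewrite mul0r add0r mul0r mulr0.
    rewrite eq_sym (negbTE ji) /= !(mul0r, mul1r, addr0, add0r).
    rewrite !eqxx /= !mul1r divfK ?gt_eqF // mulrC subrK //.
  rewrite (bigD1 l) //= big1; last first.
    by move=> q /negbTE ql; rewrite ql mulr0.
  by rewrite (negbTE li) eqxx mulr1 addr0.
have := ind B C BS CS AE.
have -> : is_perm_mx B = false.
  apply/negbTE/negP => /is_perm_mxP [s Bs].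
  have Bp : forall k, 0 < B k i.
    move=> k; rewrite mxE eqxx; exact: divr_gt0.
  have h : forall k, s k = i.
    move=> k; have := Bp k; rewrite Bs perm_entry.
    by case: eqP => // _; rewrite ltxx.
  have : o0 = o1 by apply: (perm.perm_inj (s:=s)); rewrite !h.
  by move/(congr1 val).
have -> : is_perm_mx C = false.
  apply/negbTE/negP => /is_perm_mxP [s Cs].
  have : C j i = t by rewrite mxE eqxx (negbTE ji) eqxx mul0r add0r mul1r.
  rewrite Cs perm_entry; case: eqP => _ e.
    by move: t1; rewrite -e ltxx.
  by move: t0; rewrite -e ltxx.
by [].
Qed.
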